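(* Let $\mu>0$, $\beta\in[0,1]$, $x_0\in\mathbb R^n$, and $f\in\mathcal S^2_{\mu,L}(\mathbb R^n)$ for some $L\ge\mu$. For $s>0$ let $X_s$ be the solution of the $\beta$-High Resolution ODE $$\ddot X_s+2\sqrt\mu\,\dot X_s+\beta\sqrt s\,\nabla^2 f(X_s)\dot X_s+(1+\sqrt{\mu s})\nabla f(X_s)=0,\quad X_s(0)=x_0,\ \dot X_s(0)=-\frac{2\sqrt s\,\nabla f(x_0)}{1+\sqrt{\mu s}},$$ and let $X$ be the solution of the low-resolution ODE $$\ddot X+2\sqrt\mu\,\dot X+\nabla f(X)=0,\quad X(0)=x_0,\ \dot X(0)=0.$$ Then for every $T>0$, $$\lim_{s\to 0}\max_{0\le t\le T}\|X_s(t)-X(t)\|=0.$$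
   Context: $\mathcal S^2_{\mu,L}(\mathbb R^n)$ is the class of twice differentiable, $\mu$-strongly convex functions $f:\mathbb R^n\to\mathbb R$ (i.e. $f(y)\ge f(x)+\langle\nabla f(x),y-x\rangle+\frac\mu2\|y-x\|^2$) whose gradient is $L$-Lipschitz and whose Hessian is Lipschitz in Frobenius norm ($\|\nabla^2f(x)-\nabla^2f(y)\|_F\le L'\|x-y\|$ for some $L'>0$), with $0<\mu\le L$. *)

(* Defs.v *)
From HB Require Import structures.
From mathcomp Require Import all_boot all_order all_algebra.
From mathcomp Require Import all_classical all_reals all_analysis.
Set Implicit Arguments. Unset Strict Implicit. Unset Printing Implicit Defensive.
Import Order.TTheory GRing.Theory Num.Theory.
Import numFieldNormedType.Exports.
Local Open Scope classical_set_scope.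
Local Open Scope ring_scope.

Section Defs.
Variables (R : realType) (n : nat).

(* Euclidean inner product and norm on R^n (the library's norm on matrices is
   the sup norm, so we fix the Euclidean one explicitly). *)
Definition inner (u v : 'rV[R]_n) : R := \sum_(i < n) u 0 i * v 0 i.
Definition enorm (v : 'rV[R]_n) : R := Num.sqrt (\sum_(i < n) v 0 i ^+ 2).
Definition frob (A : 'M[R]_n) : R :=
  Num.sqrt (\sum_(i < n) \sum_(j < n) A i j ^+ 2).

Definition ebasis (i : 'I_n) : 'rV[R]_n := delta_mx 0 i.

Definition grad (f : 'rV[R]_n -> R) (x : 'rV[R]_n) : 'rV[R]_n :=
  \row_i ('D_(ebasis i) f x).

Definition hess (f : 'rV[R]_n -> R) (x : 'rV[R]_n) : 'M[R]_n :=
  \matrix_(i, j) (('D_(ebasis j) (grad f) x) 0 i).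

Definition S2 (mu L : R) (f : 'rV[R]_n -> R) : Prop :=
  [/\ (forall x, differentiable f x),
      (forall x, differentiable (grad f) x),
      (forall x y, f x + inner (grad f x) (y - x) + mu / 2 * enorm (y - x) ^+ 2
                   <= f y),
      (forall x y, enorm (grad f x - grad f y) <= L * enorm (x - y)) &
      (exists L', 0 < L' /\
         forall x y, frob (hess f x - hess f y) <= L' * enorm (x - y))].

End Defs.

(* Main.v *)
Require Import Defs.
From HB Require Import structures.
From mathcomp Require Import all_boot all_order all_algebra.
From mathcomp Require Import all_classical all_reals all_analysis.
From mathcomp Require Import lra ring.
Import Order.TTheory GRing.Theory Num.Theory.
Import numFieldNormedType.Exports.
Local Open Scope classical_set_scope.
Local Open Scope ring_scope.

Set Implicit Arguments. Unset Strict Implicit. Unset Printing Implicit Defensive.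

Section Alg.
Variables (R : realType) (n : nat).
Implicit Types u v : 'rV[R]_n.

Definition N2 v : R := \sum_(i < n) v 0 i ^+ 2.

Lemma N2_ge0 v : 0 <= N2 v.
Proof. by apply: sumr_ge0 => i _; exact: sqr_ge0. Qed.

Lemma enormE v : enorm v = Num.sqrt (N2 v).
Proof. by []. Qed.

Lemma N2D u v : N2 (u + v) <= 2 * N2 u + 2 * N2 v.
Proof.
rewrite /N2 !mulr_sumr -big_split /=; apply: ler_sum => i _.
rewrite !mxE; have := sqr_ge0 (u 0 i - v 0 i); nra.
Qed.

Lemma N2Z k v : N2 (k *: v) = k ^+ 2 * N2 v.
Proof. by rewrite /N2 mulr_sumr; apply: eq_bigr => i _; rewrite !mxE exprMn. Qed.

Lemma N2N v : N2 (- v) = N2 v.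
Proof. by rewrite /N2; apply: eq_bigr => i _; rewrite !mxE sqrrN. Qed.

Lemma N2B u v : N2 (u - v) = N2 (v - u).
Proof. by rewrite -N2N opprB. Qed.

Lemma coord_le_N2 v i : v 0 i ^+ 2 <= N2 v.
Proof.
rewrite /N2 (bigD1 i) //= lerDl; apply: sumr_ge0 => j _; exact: sqr_ge0.
Qed.

Lemma CS (a b : 'I_n -> R) :
  (\sum_j a j * b j) ^+ 2 <= (\sum_j a j ^+ 2) * (\sum_j b j ^+ 2).
Proof.
have E1 : (\sum_j a j * b j) ^+ 2 = \sum_i \sum_j (a i * b i) * (a j * b j).
  by rewrite expr2 mulr_suml; apply: eq_bigr => i _; rewrite mulr_sumr.
have E2 : (\sum_j a j ^+ 2) * (\sum_j b j ^+ 2) = \sum_i \sum_j (a i ^+ 2 * b j ^+ 2).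
  by rewrite mulr_suml; apply: eq_bigr => i _; rewrite mulr_sumr.
have E3 : (\sum_j a j ^+ 2) * (\sum_j b j ^+ 2) = \sum_i \sum_j (a j ^+ 2 * b i ^+ 2).
  by rewrite mulrC mulr_suml; apply: eq_bigr => i _; rewrite mulr_sumr; apply: eq_bigr => j _; rewrite mulrC.
have -> : (\sum_j a j ^+ 2) * (\sum_j b j ^+ 2) = (\sum_i \sum_j (a i ^+ 2 * b j ^+ 2 + a j ^+ 2 * b i ^+ 2)) / 2.
  have -> : \sum_i \sum_j (a i ^+ 2 * b j ^+ 2 + a j ^+ 2 * b i ^+ 2) =
    \sum_i \sum_j (a i ^+ 2 * b j ^+ 2) + \sum_i \sum_j (a j ^+ 2 * b i ^+ 2).
    by rewrite -big_split; apply: eq_bigr => i _; rewrite -big_split.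
  rewrite -E2 -E3.
  set P := _ * _; rewrite -mulr2n -mulr_natr; lra.
rewrite E1 ler_pdivlMr // mulr_suml; apply: ler_sum => i _; rewrite mulr_suml; apply: ler_sum => j _.
have := sqr_ge0 (a i * b j - a j * b i); nra.
Qed.


Lemma N2_mulmx v (M : 'M[R]_n) :
  N2 (v *m M^T) <= (\sum_i \sum_j M i j ^+ 2) * N2 v.
Proof.
rewrite /N2 mulr_suml; apply: ler_sum => i _.
rewrite mxE (eq_bigr (fun j => v 0 j * M i j)); last by move=> j _; rewrite mxE.
by rewrite mulrC; apply: CS.
Qed.

Lemma N2_mulmx_le v (M : 'M[R]_n) c : (forall i j, `|M i j| <= c) ->
  N2 (v *m M^T) <= (n * n)%:R * c ^+ 2 * N2 v.
Proof.
move=> Hc; apply: le_trans (N2_mulmx v M) _; apply: ler_wpM2r; first exact: N2_ge0.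
have -> : (n * n)%:R * c ^+ 2 = \sum_(i < n) \sum_(j < n) c ^+ 2.
  by rewrite sumr_const card_ord sumr_const card_ord -mulrnA mulr_natl.
apply: ler_sum => i _; apply: ler_sum => j _.
have h := Hc i j; have m0 := normr_ge0 (M i j).
rewrite -[M i j ^+ 2](real_normK (num_real _)); set x := `|M i j| in h m0 *; nra.
Qed.

Lemma sqr_le_norm (y c : R) : 0 <= c -> y ^+ 2 <= c ^+ 2 -> `|y| <= c.
Proof.
move=> c0 h; rewrite -sqrtr_sqr -[c](ger0_norm c0) -sqrtr_sqr; exact: ler_wsqrtr.
Qed.

Lemma lip_N2 (a d : 'rV[R]_n) (L : R) : 0 <= L ->
  enorm a <= L * enorm d -> N2 a <= L ^+ 2 * N2 d.
Proof.
rewrite !enormE => L0 h.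
have s1 := sqrtr_ge0 (N2 a); have s2 := sqrtr_ge0 (N2 d).
rewrite -(sqr_sqrtr (N2_ge0 a)) -(sqr_sqrtr (N2_ge0 d)).
set x := Num.sqrt (N2 a) in s1 h *; set y := Num.sqrt (N2 d) in s2 h *.
have := mulr_ge0 L0 s2; rewrite -exprMn; set z := L * y in h *; nra.
Qed.

Lemma N2_ebasis (j : 'I_n) : N2 (ebasis R j) = 1.
Proof.
rewrite /N2 (bigD1 j) //= big1 ?addr0; first by rewrite /ebasis mxE !eqxx expr1n.
by move=> k kj; rewrite /ebasis mxE (negbTE kj) andbF expr0n.
Qed.


Lemma coord_is_derive (F : R -> 'rV[R]_n) t i :
  derivable F t 1 -> is_derive t 1 (fun y => F y 0 i) (derive1 F t 0 i).
Proof.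
move=> dF.
have qF : (fun h : R => h^-1 *: ((F \o shift t) (h *: 1) - F t)) @ 0^' --> 'D_1 F t by [].
have qG : (fun h : R => h^-1 *: (((fun y => F y 0 i) \o shift t) (h *: 1) - F t 0 i)) @ 0^' --> 'D_1 F t 0 i.
  have -> : (fun h : R => h^-1 *: (((fun y => F y 0 i) \o shift t) (h *: 1) - F t 0 i)) = 
     (fun M : 'rV[R]_n => M 0 i) \o (fun h : R => h^-1 *: ((F \o shift t) (h *: 1) - F t)).
    by apply/funext => h /=; rewrite !mxE.
  apply: continuous_cvg => //; exact: coord_continuous.
split; first by apply/cvg_ex; eexists; exact: qG.
by rewrite derive1E; apply/cvg_lim => //.
Qed.

Lemma N2_is_derive (G : R -> 'rV[R]_n) t : derivable G t 1 ->
  is_derive t 1 (fun y => N2 (G y)) (\sum_i 2 * G t 0 i * derive1 G t 0 i).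
Proof.
move=> dG.
have -> : (fun y => N2 (G y)) = \sum_(i < n) (fun y => G y 0 i * G y 0 i).
  by rewrite fct_sumE; apply/funext => y; apply: eq_bigr => i _; rewrite expr2.
apply: is_derive_eq.
  apply: is_derive_sum => i; apply: is_deriveM; exact: coord_is_derive.
apply: eq_bigr => i _ /=; rewrite /GRing.scale /=; lra.
Qed.

Lemma hess_bound (f : 'rV[R]_n -> R) L x i j : 0 <= L ->
  (forall x, differentiable (grad f) x) ->
  (forall x y, enorm (grad f x - grad f y) <= L * enorm (x - y)) ->
  `|hess f x i j| <= L.
Proof.
move=> L0 dg lip; rewrite /hess mxE.
set g := grad f.
have dgx : derivable g x (ebasis R j) by exact: diff_derivable.
set q := (fun h : R => h^-1 *: ((g \o shift x) (h *: ebasis R j) - g x)).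
have qc : q @ 0^' --> 'D_(ebasis R j) g x by [].
have qi : (fun h => q h 0 i) @ 0^' --> 'D_(ebasis R j) g x 0 i.
  have -> : (fun h => q h 0 i) = (fun M : 'rV[R]_n => M 0 i) \o q by [].
  apply: continuous_cvg => //; exact: coord_continuous.
have bnd : forall h, `|q h 0 i| <= L.
  move=> h; apply: sqr_le_norm => //.
  apply: le_trans (coord_le_N2 _ _) _.
  rewrite /q N2Z /=.
  have := lip (h *: ebasis R j + x) x; rewrite addrK => /(@lip_N2 _ _ _ L0).
  rewrite N2Z N2_ebasis mulr1 => H.
  have [->|h0] := eqVneq h 0; first by rewrite invr0 expr0n /= mul0r sqr_ge0.
  have h2 : 0 < h ^+ 2 by rewrite lt_neqAle sqr_ge0 andbT eq_sym sqrf_eq0.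
  by rewrite exprVn ler_pdivrMl // mulrC.
rewrite -(cvg_lim _ qi) //.
rewrite ler_norml; apply/andP; split.
  by apply: limr_ge; [apply/cvg_ex; eexists; exact: qi|near=> h; have := bnd h; rewrite ler_norml => /andP[]].
by apply: limr_le; [apply/cvg_ex; eexists; exact: qi|near=> h; have := bnd h; rewrite ler_norml => /andP[]].
Unshelve. all: by end_near.
Qed.


Lemma sum2ab u v : \sum_i 2 * u 0 i * v 0 i <= N2 u + N2 v.
Proof.
rewrite /N2 -big_split /=; apply: ler_sum => i _.
have := sqr_ge0 (u 0 i - v 0 i); nra.
Qed.

End Alg.

Lemma gronwall (R : realType) (phi dphi : R -> R) (A c T : R) : 0 < A -> 0 <= c -> 0 <= phi 0 ->
  (forall t : R, is_derive t 1 phi (dphi t)) ->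
  (forall t : R, 0 < t < T -> dphi t <= A * phi t + c) ->
  forall t : R, 0 <= t <= T -> phi t <= expR (A * T) * (phi 0 + c / A).
Proof.
move=> A0 c0 p0 dp hle t /andP[t0 tT].
pose E := fun y : R => expR (- (A * y)).
pose psi := fun y => E y * (phi y + c / A).
have dE (y : R) : is_derive y 1 E (E y * (- A)).
  have -> : E = expR \o (fun y => - (A * y)) by [].
  have hl : is_derive y 1 (fun y => - (A * y)) (- A).
    have h1 := is_deriveN (is_deriveZ A (is_derive_id y 1)).
    have -> : (fun y => - (A * y)) = (- (A *: (@id R)) : R -> R) by apply/funext => z.
    by apply: is_derive_eq; rewrite [_%:A]mulr1.
  exact: (@is_derive1_comp R expR (fun z => - (A * z)) y _ _ (is_derive_expR _) hl).
have dpsi (y : R) : is_derive y 1 psi (E y * (dphi y - A * phi y - c)).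
  have -> : psi = E * (fun y => phi y + c / A) by [].
  apply: is_derive_eq.
  rewrite /GRing.scale /= addr0; field; exact: lt0r_neq0.
have Epos (y : R) : 0 < E y by exact: expR_gt0.
have cpsi : {within `[0, T], continuous psi}.
  apply: derivable_within_continuous => y _; exact: ex_derive.
have := @ler0_derive1_le_cc R psi 0 T _ _ cpsi t 0.
have tin : t \in `[0, T] by rewrite in_itv /= t0 tT.
have zin : 0 \in `[0, T] by rewrite in_itv /= lexx (le_trans t0 tT).
move=> /(_ _ _ tin zin t0) H.
have {H} : psi t <= psi 0.
  apply: H.
    by move=> x _; exact: ex_derive.
  move=> x /[!in_itv] /= /andP[x0 xT].
  rewrite derive1E; case: (dpsi x) => _ ->.
  apply: mulr_ge0_le0; first exact: ltW.
  have := hle x; rewrite x0 xT => /(_ isT); lra.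
rewrite /psi /E mulr0 oppr0 expR0 mul1r expRN.
have eAt := expR_gt0 (A * t).
rewrite ler_pdivrMl // => H.
have cA : 0 <= c / A by apply: divr_ge0 => //; exact: ltW.
have : expR (A * t) <= expR (A * T) by rewrite ler_expR ler_wpM2l // ltW.
have : 0 <= phi 0 + c / A by lra.
move=> h1 h2.
have := ler_wpM2r h1 h2.
lra.
Qed.

Lemma final_step (R : realType) n (Xs : R -> R -> 'rV[R]_n) (X : R -> 'rV[R]_n) (T M : R) :
  0 < T -> 0 <= M ->
  (forall s, 0 < s -> s <= 1 -> forall t, 0 <= t <= T -> N2 (Xs s t - X t) <= s * M) ->
  (fun s => sup [set enorm (Xs s t - X t) | t in `[0, T]]) @ 0^'+ --> 0.
Proof.
move=> T0 M0 key.
apply/cvgrPdist_le => eps eps0.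
have e2 : 0 < eps ^+ 2 / (M + 1) by apply: divr_gt0; [exact: exprn_gt0|lra].
near=> s.
have s0 : 0 < s by near: s; exact: nbhs_right_gt.
have s1 : s < 1 by near: s; apply: nbhs_right_lt; exact: ltr01.
have s2 : s < eps ^+ 2 / (M + 1) by near: s; exact: nbhs_right_lt.
have sM : s * M <= eps ^+ 2.
  rewrite ltr_pdivlMr in s2; last lra.
  have : s * M <= s * (M + 1) by apply: ler_wpM2l; lra.
  lra.
set S := [set enorm (Xs s t - X t) | t in `[0, T]].
have ub : ubound S eps.
  move=> z [t tT <-]; rewrite enormE -(ger0_norm (ltW eps0)) -sqrtr_sqr.
  apply: ler_wsqrtr; apply: le_trans sM; apply: key => //; first exact: ltW.
have S0 : S (enorm (Xs s 0 - X 0)).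
  by exists 0 => //=; rewrite in_itv /= lexx ltW.
have hs : has_sup S by split; [exists (enorm (Xs s 0 - X 0))|exists eps].
have sup0 : 0 <= sup S.
  apply: le_trans (sup_upper_bound hs S0); rewrite enormE; exact: sqrtr_ge0.
rewrite sub0r normrN ger0_norm //; apply: ge_sup => //; by exists (enorm (Xs s 0 - X 0)).
Unshelve. all: by end_near.
Qed.

Lemma pw (R : realType) n (mu L beta s B : R) (y x V W V' W' gy gx : 'rV[R]_n)
  (H : 'M[R]_n) :
  0 < mu -> 0 <= L -> 0 <= beta <= 1 -> 0 < s -> s <= 1 -> 0 <= B ->
  (forall i j, `|H i j| <= L) ->
  N2 (gy - gx) <= L ^+ 2 * N2 (y - x) ->
  N2 W <= B -> N2 gx <= B ->
  V' + (2 * Num.sqrt mu) *: V + (beta * Num.sqrt s) *: (V *m H^T)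
    + (1 + Num.sqrt (mu * s)) *: gy = 0 ->
  W' + (2 * Num.sqrt mu) *: W + gx = 0 ->
  \sum_i 2 * (y - x) 0 i * (V - W) 0 i + \sum_i 2 * (V - W) 0 i * (V' - W') 0 i
   <= (16 * mu + 8 * ((n * n)%:R * L ^+ 2) + 4 * L ^+ 2 + 8 * mu * L ^+ 2 + 2)
       * (N2 (y - x) + N2 (V - W))
      + s * (8 * B * ((n * n)%:R * L ^+ 2 + mu)).
Proof.
move=> mu0 L0 /andP[b0 b1] s0 s1 B0 Hb lip hW hgx eY eX.
set CH := (n * n)%:R * L ^+ 2.
have CH0 : 0 <= CH by apply: mulr_ge0 => //; exact: sqr_ge0.
set a := 2 * Num.sqrt mu; set r := Num.sqrt (mu * s).
set P := V *m H^T.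
have hD : V' - W' = - (a *: (V - W) + (gy - gx)) - ((beta * Num.sqrt s) *: P + r *: gy).
  apply/rowP => i.
  have h1 := congr1 (fun M : 'rV[R]_n => M 0 i) eY.
  have h2 := congr1 (fun M : 'rV[R]_n => M 0 i) eX.
  move: h1 h2; rewrite /= !mxE.
  move: (P 0 i) => p h1 h2.
  rewrite /a /r; lra.
set e := y - x; set d := V - W.
have S1 := sum2ab e d.
have S2 := sum2ab d (V' - W').
set Pv := a *: d + (gy - gx); set Qv := (beta * Num.sqrt s) *: P + r *: gy.
have hDD : N2 (V' - W') = N2 (- Pv - Qv) by rewrite hD.
have hND : N2 (- Pv - Qv) <= 2 * N2 Pv + 2 * N2 Qv.
  by have := N2D (- Pv) (- Qv); rewrite !N2N opprD.
have hP : N2 Pv <= 2 * (4 * mu) * N2 d + 2 * (L ^+ 2 * N2 e).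
  have := N2D (a *: d) (gy - gx); rewrite N2Z /a exprMn sqr_sqrtr ?(ltW mu0) //.
  have := N2_ge0 d; lra.
have hV : N2 V <= 2 * N2 d + 2 * B.
  have := N2D d W; rewrite /d subrK; lra.
have hgy : N2 gy <= 2 * (L ^+ 2 * N2 e) + 2 * B.
  have := N2D (gy - gx) gx; rewrite subrK; lra.
have hc : N2 ((beta * Num.sqrt s) *: P) <= 2 * CH * N2 d + s * (2 * CH * B).
  rewrite N2Z exprMn sqr_sqrtr ?(ltW s0) //.
  have hPV := N2_mulmx_le V Hb.
  have bs0 : 0 <= beta ^+ 2 * s by apply: mulr_ge0; [exact: sqr_ge0|exact: ltW].
  have bs1 : beta ^+ 2 <= 1 by exact: exprn_ile1.
  have f1 : beta ^+ 2 * s * N2 (V *m H^T) <= beta ^+ 2 * s * (CH * N2 V) by apply: ler_wpM2l.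
  have f2 : beta ^+ 2 * s * (CH * N2 V) <= beta ^+ 2 * s * (CH * (2 * N2 d + 2 * B)).
    by apply: ler_wpM2l => //; apply: ler_wpM2l.
  have f3 : 0 <= (1 - beta ^+ 2 * s) * (CH * N2 d).
    apply: mulr_ge0; last by apply: mulr_ge0 => //; exact: N2_ge0.
    have : beta ^+ 2 * s <= 1 * s by apply: ler_wpM2r => //; exact: ltW.
    lra.
  have f4 : 0 <= (s - beta ^+ 2 * s) * (CH * B).
    apply: mulr_ge0; last exact: mulr_ge0.
    have : beta ^+ 2 * s <= 1 * s by apply: ler_wpM2r => //; exact: ltW.
    lra.
  rewrite /P; lra.
have hr : N2 (r *: gy) <= 2 * mu * L ^+ 2 * N2 e + s * (2 * mu * B).
  rewrite N2Z /r sqr_sqrtr; last by apply: mulr_ge0; exact: ltW.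
  have f1 : mu * s * N2 gy <= mu * s * (2 * (L ^+ 2 * N2 e) + 2 * B).
    by apply: ler_wpM2l => //; apply: mulr_ge0; exact: ltW.
  have f2 : 0 <= (1 - s) * (mu * (L ^+ 2 * N2 e)).
    apply: mulr_ge0; first lra.
    apply: mulr_ge0; first exact: ltW.
    apply: mulr_ge0; [exact: sqr_ge0|exact: N2_ge0].
  lra.
have hQ : N2 Qv <= 2 * N2 ((beta * Num.sqrt s) *: P) + 2 * N2 (r *: gy) by apply: N2D.
have ne0 := N2_ge0 e; have nd0 := N2_ge0 d.
have L2 : 0 <= L ^+ 2 by exact: sqr_ge0.
have muL2 : 0 <= mu * L ^+ 2 by apply: mulr_ge0 => //; exact: ltW.
have p1 := mulr_ge0 L2 nd0; have p2 := mulr_ge0 muL2 nd0.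
have p3 := mulr_ge0 (ltW mu0) ne0; have p4 := mulr_ge0 CH0 ne0.
lra.
Qed.

Unset Implicit Arguments. Set Strict Implicit.

Theorem lemma3p4 (R : realType) (n : nat) (mu L beta : R) (x0 : 'rV[R]_n)
  (f : 'rV[R]_n -> R)
  (Xs : R -> R -> 'rV[R]_n) (X : R -> 'rV[R]_n) :
  0 < mu -> mu <= L -> 0 <= beta <= 1 ->
  S2 mu L f ->
  (* X_s solves the beta-high-resolution ODE, for every s > 0 *)
  (forall s, 0 < s ->
     [/\ (forall t, derivable (Xs s) t 1),
         (forall t, derivable (derive1 (Xs s)) t 1),
         (forall t, 0 <= t ->
            derive1 (derive1 (Xs s)) t + (2 * Num.sqrt mu) *: derive1 (Xs s) t
            + (beta * Num.sqrt s) *: (derive1 (Xs s) t *m (hess f (Xs s t))^T)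
            + (1 + Num.sqrt (mu * s)) *: grad f (Xs s t) = 0),
         Xs s 0 = x0 &
         derive1 (Xs s) 0 = - ((2 * Num.sqrt s) / (1 + Num.sqrt (mu * s))) *: grad f x0]) ->
  (* X solves the low-resolution ODE *)
  [/\ (forall t, derivable X t 1),
      (forall t, derivable (derive1 X) t 1),
      (forall t, 0 <= t ->
         derive1 (derive1 X) t + (2 * Num.sqrt mu) *: derive1 X t + grad f (X t) = 0),
      X 0 = x0 &
      derive1 X 0 = 0] ->
  forall T : R, 0 < T ->
    (fun s => sup [set enorm (Xs s t - X t) | t in `[0, T]]) @ 0^'+ --> 0.
Proof.
move=> mu0 muL bb [fdiff gdiff _ lip _] HXs [dX ddX odeX X0 dX0] T T0.
have L0 : 0 <= L by apply: le_trans muL; exact: ltW.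
pose W := derive1 X.
have dG (y : R) : derivable (fun z => grad f (X z)) y 1.
  apply/derivable1_diffP.
  apply: (@differentiable_comp _ _ _ _ X (grad f)); [exact/derivable1_diffP|exact: gdiff].
pose gB := fun y => N2 (W y) + N2 (grad f (X y)).
have cgB : {within `[0, T], continuous gB}.
  apply: derivable_within_continuous => y _.
  have d1 : derivable (fun z => N2 (W z)) y 1 by case: (N2_is_derive (ddX y)).
  have d2 : derivable (fun z => N2 (grad f (X z))) y 1 by case: (N2_is_derive (dG y)).
  exact: derivableD.
have [cB cBin Bmax] := EVT_max (ltW T0) cgB.
set B := gB cB.
have hW t : 0 <= t <= T -> N2 (W t) <= B.
  move=> tT; have := Bmax t; rewrite in_itv /= tT => /(_ isT).
  rewrite -/B /gB; have := N2_ge0 (grad f (X t)); lra.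
have hgX t : 0 <= t <= T -> N2 (grad f (X t)) <= B.
  move=> tT; have := Bmax t; rewrite in_itv /= tT => /(_ isT).
  rewrite -/B /gB; have := N2_ge0 (W t); lra.
have B0 : 0 <= B by apply: le_trans (hW 0 _); [exact: N2_ge0|rewrite lexx ltW].
pose CH := (n * n)%:R * L ^+ 2.
have CH0 : 0 <= CH by apply: mulr_ge0 => //; exact: sqr_ge0.
pose K := 16 * mu + 8 * CH + 4 * L ^+ 2 + 8 * mu * L ^+ 2.
pose A := K + 2.
have A0 : 0 < A.
  have : 0 <= mu * L ^+ 2 by apply: mulr_ge0; [exact: ltW|exact: sqr_ge0].
  have := sqr_ge0 L; rewrite /A /K; lra.
pose K' := 8 * B * (CH + mu).
have K'0 : 0 <= K' by apply: mulr_ge0; [lra|lra].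
pose G0 := N2 (grad f x0).
have G00 : 0 <= G0 by exact: N2_ge0.
pose M := expR (A * T) * (4 * G0 + K' / A).
have M0 : 0 <= M.
  apply: mulr_ge0; first exact: ltW (expR_gt0 _).
  have : 0 <= K' / A by apply: divr_ge0 => //; exact: ltW.
  lra.
apply: (@final_step _ _ _ _ _ M) => // s s0 s1 t tT.
case: (HXs s s0) => dY ddY odeY Y0 dY0.
pose Y := Xs s; pose V := derive1 Y.
pose e := fun y => Y y - X y; pose d := fun y => V y - W y.
have eE : e = Y - X by apply/funext.
have dE : d = V - W by apply/funext.
have de (y : R) : derivable e y 1 by rewrite eE; exact: derivableB.
have dd (y : R) : derivable d y 1 by rewrite dE; exact: derivableB.
have dee (y : R) : derive1 e y = d y.
  by rewrite eE derive1E deriveB; [rewrite /d /V /W !derive1E|exact: dY|exact: dX].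
have dde (y : R) : derive1 d y = derive1 V y - derive1 W y.
  by rewrite dE derive1E deriveB; [rewrite !derive1E|exact: ddY|exact: ddX].
pose phi := fun y => N2 (e y) + N2 (d y).
pose dphi := fun y => \sum_i 2 * e y 0 i * d y 0 i
  + \sum_i 2 * d y 0 i * (derive1 V y - derive1 W y) 0 i.
have dp (y : R) : is_derive y 1 phi (dphi y).
  have h1 := N2_is_derive (de y); have h2 := N2_is_derive (dd y).
  rewrite dee in h1; rewrite dde in h2.
  exact: (is_deriveD h1 h2).
have hbnd (y : R) : 0 < y < T -> dphi y <= A * phi y + s * K'.
  move=> /andP[y0 yT].
  have yT' : 0 <= y <= T by rewrite (ltW y0) (ltW yT).
  have Hb : forall i j, `|hess f (Y y) i j| <= L.
    by move=> i j; exact: hess_bound L0 gdiff lip.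
  have := pw mu0 L0 bb s0 s1 B0 Hb (lip_N2 L0 (lip (Y y) (X y))) (hW y yT') (hgX y yT')
    (odeY y (ltW y0)) (odeX y (ltW y0)).
  by [].
have N20 : N2 (0 : 'rV[R]_n) = 0 by rewrite /N2 big1 // => i _; rewrite mxE expr0n.
have phi0 : phi 0 <= 4 * s * G0.
  rewrite /phi /e /d /V /W /Y Y0 X0 subrr N20 add0r dX0 dY0 subr0 N2Z sqrrN.
  set r := Num.sqrt (mu * s).
  have r0 : 0 <= r by exact: sqrtr_ge0.
  have q0 : 0 <= 2 * Num.sqrt s by apply: mulr_ge0 => //; exact: sqrtr_ge0.
  have q1 : 2 * Num.sqrt s / (1 + r) <= 2 * Num.sqrt s.
    by rewrite ler_pdivrMr; [rewrite ler_peMr //; lra|lra].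
  have q2 : 0 <= 2 * Num.sqrt s / (1 + r) by apply: divr_ge0 => //; lra.
  have : (2 * Num.sqrt s / (1 + r)) ^+ 2 <= (2 * Num.sqrt s) ^+ 2.
    by rewrite !expr2; exact: ler_pM.
  have e4 : (2 * Num.sqrt s) ^+ 2 = 4 * s.
    by rewrite exprMn sqr_sqrtr; [ring|exact: ltW].
  rewrite e4 => h.
  rewrite -/G0; have := ler_wpM2r G00 h; lra.
have sK0 : 0 <= s * K' by apply: mulr_ge0 => //; exact: ltW.
have p00 : 0 <= phi 0 by apply: addr_ge0; exact: N2_ge0.
have := gronwall A0 sK0 p00 dp hbnd tT.
have -> : phi t = N2 (Xs s t - X t) + N2 (d t) by [].
have := N2_ge0 (d t).
have E0 := expR_gt0 (A * T).
have h3 : expR (A * T) * (phi 0 + s * K' / A) <= expR (A * T) * (4 * s * G0 + s * K' / A).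
  by apply: ler_wpM2l; [exact: ltW|lra].
have -> : s * M = expR (A * T) * (4 * s * G0 + s * K' / A) by rewrite /M; ring.
lra.
Qed.
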